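(* Let $a,b,c,d$ be integers with $a\neq 0$, $c\neq 0$, $\gcd(a,b)=1$, $\gcd(c,d)=1$, and let $k\ge 2$ be an integer. Then there are no rational numbers $A,B$ such that the polynomial identity $$S_{a,b}^k(Ax^2+B)=S_{c,d}^{2k+1}\!\left(x-\frac{d}{c}+\frac12\right)$$ holds in $\mathbb{Q}[x]$.
   Context: The Bernoulli polynomials $B_n(x)$ are defined by $\frac{t e^{tx}}{e^t-1}=\sum_{n\ge 0}B_n(x)\frac{t^n}{n!}$. For integers $a\neq 0$, $b$ with $\gcd(a,b)=1$ and an integer $k\ge 1$, define the polynomial $$S_{a,b}^k(x):=\frac{a^k}{k+1}\left(B_{k+1}\!\left(x+\frac{b}{a}\right)-B_{k+1}\!\left(\frac{b}{a}\right)\right)\in\mathbb{Q}[x].$$ *)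

(* Defs.v *)
From HB Require Import structures.
From mathcomp Require Import all_boot all_order all_algebra.
Set Implicit Arguments. Unset Strict Implicit. Unset Printing Implicit Defensive.
Import Order.TTheory GRing.Theory Num.Theory.
Local Open Scope ring_scope.

(* bern_seq n = [:: B_0; ...; B_n], Bernoulli numbers with t/(e^t-1)
   convention (B_1 = -1/2), via  sum_{k=0}^{n} C(n+1,k) B_k = 0 (n >= 1). *)
Fixpoint bern_seq (n : nat) : seq rat :=
  match n with
  | 0%N => [:: 1]
  | n'.+1 =>
      let s := bern_seq n' in
      rcons s (- (\sum_(k < n'.+1) ('C(n'.+2, k))%:R * s`_k) / (n'.+2)%:R)
  end.

Definition bernoulli_number (n : nat) : rat := (bern_seq n)`_n.

Definition bernoulli_poly (n : nat) : {poly rat} :=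
  \sum_(k < n.+1) (('C(n, k))%:R * bernoulli_number k) *: 'X^(n - k).

Definition S_poly (a b : int) (k : nat) : {poly rat} :=
  ((a%:~R : rat) ^+ k / (k.+1)%:R) *:
    ((bernoulli_poly k.+1 \Po ('X + ((b%:~R : rat) / a%:~R)%:P))
     - ((bernoulli_poly k.+1).[(b%:~R : rat) / a%:~R])%:P).

(* Main.v *)
Require Import Defs.
From HB Require Import structures.
From mathcomp Require Import all_boot all_order all_algebra.
From mathcomp Require Import ring lra zify.
Import Order.TTheory GRing.Theory Num.Theory.
Local Open Scope ring_scope.

Lemma sum_trunc (F : nat -> rat) n i : (i <= n)%N ->
  (forall k, (i < k)%N -> (k <= n)%N -> F k = 0) ->
  \sum_(k < n.+1) F k = \sum_(k < i.+1) F k.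
Proof.
move=> hin hF; rewrite -!(big_mkord xpredT) (big_cat_nat _ (n:=i.+1)) //=.
rewrite [X in _ + X]big1_seq ?addr0 // => k /andP[_]; rewrite mem_index_iota => /andP[hk hk'].
exact: hF.
Qed.

Lemma binR1 x : ('C(x,1))%:R = x%:R :> rat.
Proof. by rewrite bin1. Qed.
Lemma binR2 x : ('C(x,2))%:R = x%:R * (x%:R - 1) / 2 :> rat.
Proof.
elim: x => [|x IH]; first by rewrite bin0n /=; field.
by rewrite binS natrD IH binR1 -natr1; field.
Qed.
Lemma binR3 x : ('C(x,3))%:R = x%:R * (x%:R - 1) * (x%:R - 2) / 6 :> rat.
Proof.
elim: x => [|x IH]; first by rewrite bin0n /=; field.
by rewrite binS natrD IH binR2 -natr1; field.
Qed.
Lemma binR4 x : ('C(x,4))%:R = x%:R * (x%:R - 1) * (x%:R - 2) * (x%:R - 3) / 24 :> rat.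
Proof.
elim: x => [|x IH]; first by rewrite bin0n /=; field.
by rewrite binS natrD IH binR3 -natr1; field.
Qed.

Lemma binsub n k i : (k <= i)%N -> (i <= n)%N -> 'C(n - k, n - i) = 'C(n - k, i - k).
Proof.
move=> ki ii; have -> : (n - i = (n - k) - (i - k))%N by lia.
rewrite bin_sub //; lia.
Qed.
Lemma coef_pow (u h : rat) e p r : (0 < e)%N ->
  ((u *: 'X^e + h%:P) ^+ p)`_(e * r) = u ^+ r * h ^+ (p - r) *+ 'C(p, r).
Proof.
move=> e0; rewrite addrC exprDn coef_sum.
under eq_bigr => i _ do rewrite coefMn -rmorphXn exprZn -exprM coefCM coefZ coefXn eqn_pmul2l //.
case: (ltnP r p.+1) => hr.
  rewrite (bigD1 (Ordinal hr)) //= eqxx big1 ?addr0 => [|i /eqP hi]; first by rewrite mulr1 mulrC.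
  have -> : (r == i) = false by apply/negbTE/eqP => E; apply: hi; apply: val_inj.
  by rewrite !mulr0 mul0rn.
rewrite bin_small // mulr0n big1 // => i _.
have -> : (r == i) = false by apply/negbTE; rewrite neq_ltn (leq_trans (ltn_ord i) hr) orbT.
by rewrite !mulr0 mul0rn.
Qed.

Lemma coef_bcomp n e (u h : rat) j : (0 < e)%N ->
  (bernoulli_poly n \Po (u *: 'X^e + h%:P))`_(e * j) =
  \sum_(k < n.+1) ('C(n,k)%:R * bernoulli_number k) *
     (u ^+ j * h ^+ ((n - k) - j) *+ 'C(n - k, j)).
Proof.
move=> e0.
set q := (u *: 'X^e + h%:P).
have -> : bernoulli_poly n \Po q = \sum_(k < n.+1) (('C(n,k)%:R * bernoulli_number k) *: q ^+ (n - k)).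
  rewrite /bernoulli_poly; elim/big_rec2: _ => [|i x y _ <-]; first by rewrite comp_poly0.
  by rewrite comp_polyD comp_polyZ comp_Xn_poly.
rewrite coef_sum; apply: eq_bigr => k _; by rewrite coefZ coef_pow.
Qed.

Lemma coef_main n e (u h : rat) i : (0 < e)%N -> (i <= n)%N ->
  (bernoulli_poly n \Po (u *: 'X^e + h%:P))`_(e * (n - i)) =
  u ^+ (n - i) * \sum_(k < i.+1) ('C(n,k)%:R * bernoulli_number k) *
     (h ^+ (i - k) * ('C(n - k, i - k))%:R).
Proof.
move=> e0 hin; rewrite coef_bcomp // (@sum_trunc (fun k => ('C(n,k)%:R * bernoulli_number k) *
     (u ^+ (n - i) * h ^+ ((n - k) - (n - i)) *+ 'C(n - k, n - i))) n i) //.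
  rewrite big_distrr; apply: eq_bigr => k _ /=.
  have hk : (k <= i)%N by rewrite -ltnS.
  have -> : ((n - k) - (n - i) = i - k)%N by lia.
  rewrite binsub // -mulr_natr; ring.
move=> k hk hkn; rewrite (@bin_small (n - k)) ?mulr0n ?mulr0 //; lia.
Qed.
Lemma nat_sq3 (p q : nat) : (0 < q)%N -> (p ^ 2 = 3 * q ^ 2)%N -> False.
Proof.
move=> q0 E.
have p0 : (0 < p)%N.
  case: p E => [|p] //= E; have : (0 < 3 * q ^ 2)%N by rewrite muln_gt0 expn_gt0 q0.
  by rewrite -E.
have := congr1 (logn 3) E.
rewrite lognX lognM ?expn_gt0 ?q0 // lognX.
have -> : logn 3 3 = 1%N by rewrite logn_prime // eqxx.
lia.
Qed.

Lemma rat_sq3 (x : rat) : x ^+ 2 <> 3.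
Proof.
move=> E.
have d0 : (denq x)%:~R != 0 :> rat by rewrite intr_eq0 denq_neq0.
have E2 : (numq x) ^+ 2 = 3 * (denq x) ^+ 2.
  apply: (@intr_inj rat).
  rewrite rmorphXn rmorphM /= rmorphXn /=.
  have : x = (numq x)%:~R / (denq x)%:~R by rewrite divq_num_den.
  move=> hx; rewrite hx in E.
  have : ((numq x)%:~R / (denq x)%:~R) ^+ 2 * ((denq x)%:~R) ^+ 2 = 3 * ((denq x)%:~R) ^+ 2 :> rat by rewrite E.
  move=> <-; field; exact: d0.
apply: (@nat_sq3 `|numq x|%N `|denq x|%N).
  by rewrite absz_gt0 denq_neq0.
have := congr1 absz E2; rewrite abszM !abszX /=. done.
Qed.

Lemma bern_seqS n : bern_seq n.+1 = rcons (bern_seq n)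
   (- (\sum_(k < n.+1) ('C(n.+2, k))%:R * (bern_seq n)`_k) / (n.+2)%:R).
Proof. by []. Qed.
Lemma bs1 : bern_seq 1 = [:: 1; -(1/2)].
Proof. by rewrite /= big_ord_recr big_ord0 /=; congr [:: _; _]; field. Qed.
Lemma bs2 : bern_seq 2 = [:: 1; -(1/2); 1/6].
Proof. rewrite bern_seqS bs1 !big_ord_recr big_ord0 /=. congr [:: _; _; _]; field. Qed.
Lemma bs3 : bern_seq 3 = [:: 1; -(1/2); 1/6; 0].
Proof. rewrite bern_seqS bs2 !big_ord_recr big_ord0 /=. congr [:: _; _; _; _]; field. Qed.
Lemma bs4 : bern_seq 4 = [:: 1; -(1/2); 1/6; 0; -(1/30)].
Proof. rewrite bern_seqS bs3 !big_ord_recr big_ord0 /=. congr [:: _; _; _; _; _]; field. Qed.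
Lemma bn0 : bernoulli_number 0 = 1. Proof. by []. Qed.
Lemma bn1 : bernoulli_number 1 = -(1/2). Proof. by rewrite /bernoulli_number bs1. Qed.
Lemma bn2 : bernoulli_number 2 = 1/6. Proof. by rewrite /bernoulli_number bs2. Qed.
Lemma bn3 : bernoulli_number 3 = 0. Proof. by rewrite /bernoulli_number bs3. Qed.
Lemma bn4 : bernoulli_number 4 = -(1/30). Proof. by rewrite /bernoulli_number bs4. Qed.

Lemma coef_main' n e (u h : rat) i t : (0 < e)%N -> (i <= n)%N -> t = (e * (n - i))%N ->
  (bernoulli_poly n \Po (u *: 'X^e + h%:P))`_t =
  u ^+ (n - i) * \sum_(k < i.+1) ('C(n,k)%:R * bernoulli_number k) *
     (h ^+ (i - k) * ('C(n - k, i - k))%:R).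
Proof. by move=> e0 hin ->; apply: coef_main. Qed.

Theorem mainTheorem7 (a b c d : int) (k : nat) :
  a != 0 -> c != 0 -> coprimez a b -> coprimez c d -> (2 <= k)%N ->
  ~ exists A B : rat,
      S_poly a b k \Po (A *: 'X^2 + B%:P)
      = S_poly c d (2 * k).+1
          \Po ('X - ((d%:~R : rat) / c%:~R)%:P + (1 / 2 : rat)%:P).
Proof.
move=> a0 c0 _ _; case: k => [|[|k']] // _ [A [B H]].
set be := (b%:~R : rat) / a%:~R in H.
set de := (d%:~R : rat) / c%:~R in H.
set al := ((a%:~R : rat) ^+ k'.+2 / (k'.+3)%:R).
set ga := ((c%:~R : rat) ^+ (2 * k'.+2).+1 / ((2 * k'.+2).+2)%:R).
have LH t : t != 0%N -> (S_poly a b k'.+2 \Po (A *: 'X^2 + B%:P))`_t =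
    al * (bernoulli_poly k'.+3 \Po (A *: 'X^2 + (B + be)%:P))`_t.
  move=> t0; rewrite /S_poly comp_polyZ comp_polyB comp_polyC -comp_polyA comp_polyD comp_polyX comp_polyC.
  by rewrite -addrA -polyCD coefZ coefB coefC (negbTE t0) subr0.
have RH t : t != 0%N -> (S_poly c d (2 * k'.+2).+1 \Po ('X - de%:P + (1 / 2 : rat)%:P))`_t =
    ga * (bernoulli_poly (2 * k'.+2).+2 \Po (1 *: 'X^1 + (1 / 2 : rat)%:P))`_t.
  move=> t0; rewrite /S_poly comp_polyZ comp_polyB comp_polyC -comp_polyA comp_polyD comp_polyX comp_polyC.
  have -> : 'X - de%:P + (1 / 2 : rat)%:P + de%:P = 1 *: 'X^1 + (1 / 2 : rat)%:P.
    by rewrite scale1r expr1 addrAC subrK.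
  by rewrite coefZ coefB coefC (negbTE t0) subr0.
have E i : (i <= 2)%N -> al * (bernoulli_poly k'.+3 \Po (A *: 'X^2 + (B + be)%:P))`_(2 * (k'.+3 - i)) =
      ga * (bernoulli_poly (2 * k'.+2).+2 \Po (1 *: 'X^1 + (1 / 2 : rat)%:P))`_(1 * ((2 * k'.+2).+2 - 2 * i)).
  move=> hi; rewrite -LH; last by lia.
  have -> : (1 * ((2 * k'.+2).+2 - 2 * i) = 2 * (k'.+3 - i))%N by lia.
  by rewrite -RH ?H //; lia.
have E0 := E 0%N isT; have E1 := E 1%N isT; have E2 := E 2%N isT.
rewrite (coef_main _ _ _ _ 0) // (coef_main' _ _ _ _ 0) // in E0; try lia.
rewrite (coef_main _ _ _ _ 1) // (coef_main' _ _ _ _ 2) // in E1; try lia.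
have hk2 : (2 <= k'.+3)%N by lia.
have hk4 : (4 <= (2 * k'.+2).+2)%N by lia.
rewrite (coef_main _ _ _ _ 2) // (coef_main' _ _ _ _ 4) // in E2; try lia.
rewrite !big_ord_recr !big_ord0 /= in E0 E1 E2.
rewrite ?bn0 ?bn1 ?bn2 ?bn3 ?bn4 !expr1n !mul1r in E0 E1 E2.
rewrite !mul2n !doubleS !subn0 !subSS !subn0 !bin0 in E0 E1 E2.
rewrite ?binR4 ?binR3 ?binR2 ?bin1 ?expr0 ?expr1 in E0 E1 E2.
pose K := (k'%:R : rat).
have c3 : (k'.+3)%:R = K + 3 :> rat by rewrite -[k'.+3]/(3 + k')%N natrD addrC.
have c2 : (k'.+2)%:R = K + 2 :> rat by rewrite -[k'.+2]/(2 + k')%N natrD addrC.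
have c6 : (k'.*2.+2.+4)%:R = 2 * K + 6 :> rat by rewrite -[k'.*2.+2.+4]/(6 + k'.*2)%N natrD addrC -mul2n natrM.
have c5 : (k'.*2.+1.+4)%:R = 2 * K + 5 :> rat by rewrite -[k'.*2.+1.+4]/(5 + k'.*2)%N natrD addrC -mul2n natrM.
have c4 : (k'.*2.+4)%:R = 2 * K + 4 :> rat by rewrite -[k'.*2.+4]/(4 + k'.*2)%N natrD addrC -mul2n natrM.
have c3' : (k'.*2.+3)%:R = 2 * K + 3 :> rat by rewrite -[k'.*2.+3]/(3 + k'.*2)%N natrD addrC -mul2n natrM.
rewrite ?c3 ?c2 ?c6 ?c5 ?c4 ?c3' in E1 E2.
have gaN : ga != 0.
  rewrite /ga mulf_neq0 // ?expf_neq0 ?intr_eq0 // invr_eq0 pnatr_eq0 //.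
pose T := A ^+ k'.+1.
have eA3 : A ^+ k'.+3 = A * (A * T) by rewrite /T !exprS.
have eA2 : A ^+ k'.+2 = A * T by rewrite /T !exprS.
rewrite eA3 in E0; rewrite eA2 in E1; rewrite -/T in E2.
set Ee := B + be in E1 E2.
have h0 : al * T * A * A = ga by move: E0; rewrite !add0r !mulr1 => <-; ring.
have hP : al * T != 0 by apply: contraNneq gaN => h; rewrite -h0 h !mul0r.
have hA : A != 0 by apply: contraNneq gaN => h; rewrite -h0 h !mulr0.
move/eqP: E1; rewrite -subr_eq0 -h0 => /eqP E1.
move/eqP: E2; rewrite -subr_eq0 -h0 => /eqP E2.
have e1 : (al * T * A) * ((K + 3) * (Ee - 1/2) + A * (K + 3) * (2 * K + 5) / 12) = 0.
  by rewrite -E1; field.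
have K0 : 0 <= K by rewrite /K ler0n.
have K3 : K + 3 != 0 by rewrite lt0r_neq0 //; lra.
have K2 : K + 2 != 0 by rewrite lt0r_neq0 //; lra.
have hE : Ee = 1/2 - A * (2 * K + 5) / 12.
  move/eqP: e1; rewrite mulf_eq0 (negbTE (mulf_neq0 hP hA)) /= => /eqP e1.
  have : (K + 3) * ((Ee - 1/2) + A * (2 * K + 5) / 12) = 0 by rewrite -e1; ring.
  move/eqP; rewrite mulf_eq0 (negbTE K3) /= => /eqP e1'.
  by apply/eqP; rewrite -subr_eq0; apply/eqP; rewrite -e1'; ring.
have hK : K = 0 \/ 1 <= K.
  by rewrite /K; case: (k') => [|n]; [left | right; rewrite ler1n].
clearbody al T K Ee ga.
have e2 : (al * T) * ((K + 3) * (K + 2) / 2 * (A ^+ 2 * (2 * K + 5) * (1 - K) - 15) / 180) = 0.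
  by rewrite -E2 hE; field.
have fin : A ^+ 2 * (2 * K + 5) * (1 - K) = 15.
  move/eqP: e2; rewrite mulf_eq0 (negbTE hP) orFb => /eqP e2.
  have hc : (K + 3) * (K + 2) / 2 / 180 != 0.
    apply: lt0r_neq0.
    by apply: divr_gt0; [apply: divr_gt0; [apply: mulr_gt0; lra|lra]|lra].
  apply/eqP; rewrite -subr_eq0; apply/eqP; apply: (mulfI hc); rewrite mulr0 -e2.
  field.
  done.
case: hK => [K0e | K1].
  move: fin; rewrite K0e mulr0 add0r subr0 mulr1 => fin.
  apply: (rat_sq3 A).
  have h5 : (5 : rat) != 0 by apply: lt0r_neq0; lra.
  apply: (mulIf h5); rewrite fin; ring.
have h : 0 <= A ^+ 2 * ((2 * K + 5) * (K - 1)).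
  by apply: mulr_ge0; [rewrite sqr_ge0 | apply: mulr_ge0; lra].
move: h fin; clear.
move=> h fin; lra.
Qed.
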